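(* Let $M\ni h$ be a positive definite lattice with a distinguished vector $h$, $h^2=3$, such that $h$ is characteristic in $M$ and $M$ contains an $h$-plane. Let $S=S(M)$ be the index-$3$ overlattice of $h^\perp\oplus\mathbb Z\hbar$ (with $h^\perp\subset M$ the orthogonal complement of $h$ and $\hbar^2=12$) obtained by adjoining $\tfrac13(3l-h+\hbar)$, where $l$ is any $h$-plane of $M$ (the result does not depend on the choice of $l$). Then: (1) $S$ is even and positive definite; (2) $\hbar\in 4S^\vee$; (3) the orthogonal complement of $\hbar$ in $S$ coincides with $h^\perp\subset M$; in particular their sets of roots (vectors of square $2$) coincide; (4) the map $x\mapsto\tfrac13(3x-h+\hbar)$ is a bijection between the $h$-planes of $M$ and the planes of $S$; (5) the same map is a bijection between the vectors $e\in M$ with $e^2=e\cdot h=1$ and the vectors $e\in S$ with $e^2=2$, $e\cdot\hbar=4$.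
   Context: A lattice is a free abelian group of finite rank with a symmetric bilinear form $x\cdot y$ valued in $\mathbb Z$; $L^\vee=\{x\in L\otimes\mathbb Q: x\cdot y\in\mathbb Z\ \forall y\in L\}$. A vector $v\in M$ is characteristic if $x^2\equiv x\cdot v\pmod 2$ for all $x\in M$. An $h$-plane in $M$ is a vector $l$ with $l^2=3$, $l\cdot h=1$. A plane in $S$ is a vector $l\in S$ with $l^2=l\cdot\hbar=4$. A lattice is even if $x^2\in2\mathbb Z$ for all $x$. *)

(* Defs.v *)
From HB Require Import structures.
From mathcomp Require Import all_boot all_order all_algebra.
Set Implicit Arguments. Unset Strict Implicit. Unset Printing Implicit Defensive.
Import Order.TTheory GRing.Theory Num.Theory.
Local Open Scope ring_scope.

(* A lattice M of rank n is Z^n (row vectors 'rV[int]_n) with the integral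
   symmetric bilinear bform given by the Gram matrix G. *)
Definition bform (n : nat) (G : 'M[int]_n) (x y : 'rV[int]_n) : int :=
  (x *m G *m y^T) 0 0.

Definition symmetric_gram (n : nat) (G : 'M[int]_n) : Prop := G^T = G.

Definition pos_def (n : nat) (G : 'M[int]_n) : Prop :=
  forall x : 'rV[int]_n, x != 0 -> 0 < bform G x x.

Definition is_characteristic (n : nat) (G : 'M[int]_n) (v : 'rV[int]_n) : Prop :=
  forall x : 'rV[int]_n, (2 %| bform G x x - bform G x v)%Z.

Definition hplane (n : nat) (G : 'M[int]_n) (h l : 'rV[int]_n) : Prop :=
  bform G l l = 3 /\ bform G l h = 1.

(* The ambient rational space  (M (x) Q) (+) Q hbar, with hbar^2 = 12. *)
Notation V n := (('rV[rat]_n * rat)%type) (only parsing).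

Definition ratmx (n : nat) (x : 'rV[int]_n) : 'rV[rat]_n :=
  map_mx (fun z : int => (z%:~R : rat)) x.

Definition formV (n : nat) (G : 'M[int]_n) (u v : V n) : rat :=
  (u.1 *m map_mx (fun z : int => (z%:~R : rat)) G *m v.1^T) 0 0
  + 12 * u.2 * v.2.

Definition addV (n : nat) (u v : V n) : V n := (u.1 + v.1, u.2 + v.2).
Definition oppV (n : nat) (u : V n) : V n := (- u.1, - u.2).
Definition scaleV (n : nat) (c : rat) (u : V n) : V n := (c *: u.1, c * u.2).

Definition embM (n : nat) (x : 'rV[int]_n) : V n := (ratmx x, 0).

Definition hbar (n : nat) : V n := (0, 1).

Definition phi (n : nat) (h x : 'rV[int]_n) : V n :=
  scaleV 3^-1 (addV (addV (scaleV 3 (embM x)) (oppV (embM h))) (hbar n)).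

Definition inS (n : nat) (G : 'M[int]_n) (h l : 'rV[int]_n) (v : V n) : Prop :=
  exists (x : 'rV[int]_n) (a b : int),
    bform G x h = 0 /\ v = addV (addV (embM x) (scaleV a%:~R (hbar n))) (scaleV b%:~R (phi h l)).

(* S^vee, inside S (x) Q = the whole ambient space (S has full rank). *)
Definition dualS (n : nat) (G : 'M[int]_n) (h l : 'rV[int]_n) (v : V n) : Prop :=
  forall w, inS G h l w -> exists k : int, formV G v w = k%:~R.

Definition planeS (n : nat) (G : 'M[int]_n) (h l : 'rV[int]_n) (s : V n) : Prop :=
  inS G h l s /\ formV G s s = 4 /\ formV G s (hbar n) = 4.

(* Main.v *)
Require Import Defs.
From HB Require Import structures.
From mathcomp Require Import all_boot all_order all_algebra.
From mathcomp Require Import ring lra.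
Import Order.TTheory GRing.Theory Num.Theory.
Set Implicit Arguments. Unset Strict Implicit.
Local Open Scope ring_scope.

Definition Bq (n : nat) (G : 'M[int]_n) (u w : 'rV[rat]_n) : rat :=
  (u *m map_mx (fun z : int => (z%:~R : rat)) G *m w^T) 0 0.

Section B.
Variables (n : nat) (G : 'M[int]_n).
Lemma BqDl u v w : Bq G (u + v) w = Bq G u w + Bq G v w.
Proof. by rewrite /Bq !mulmxDl mxE. Qed.
Lemma BqDr u v w : Bq G u (v + w) = Bq G u v + Bq G u w.
Proof. by rewrite /Bq linearD /= mulmxDr mxE. Qed.
Lemma BqZl a u w : Bq G (a *: u) w = a * Bq G u w.
Proof. by rewrite /Bq -!scalemxAl mxE. Qed.
Lemma BqZr a u w : Bq G u (a *: w) = a * Bq G u w.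
Proof. by rewrite /Bq linearZ /= -scalemxAr mxE. Qed.
Lemma BqNl u w : Bq G (- u) w = - Bq G u w.
Proof. by rewrite -scaleN1r BqZl mulN1r. Qed.
Lemma BqNr u w : Bq G u (- w) = - Bq G u w.
Proof. by rewrite -scaleN1r BqZr mulN1r. Qed.
Lemma Bq0l w : Bq G 0 w = 0.
Proof. by rewrite /Bq !mul0mx mxE. Qed.
Lemma Bq0r w : Bq G w 0 = 0.
Proof. by rewrite /Bq trmx0 mulmx0 mxE. Qed.
Lemma Bq_ratmx x y : Bq G (ratmx x) (ratmx y) = (bform G x y)%:~R.
Proof. rewrite /Bq /ratmx; change (fun z : int => (z%:~R : rat)) with (@intmul rat 1).
rewrite map_trmx -!map_mxM. rewrite /map_mx mxE. by []. Qed.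
Lemma formVE u v : formV G u v = Bq G u.1 v.1 + 12 * u.2 * v.2.
Proof. by []. Qed.
Lemma bformC : symmetric_gram G -> forall x y, bform G x y = bform G y x.
Proof. move=> sG x y; rewrite /bform.
have -> : (y *m G *m x^T) 0 0 = ((y *m G *m x^T)^T) 0 0 by rewrite /trmx mxE.
by rewrite !trmx_mul trmxK (sG : G^T = G) mulmxA. Qed.
End B.

Definition vS (n : nat) (h l x : 'rV[int]_n) (a b : int) : V n :=
  addV (addV (embM x) (scaleV a%:~R (hbar n))) (scaleV b%:~R (phi h l)).

Section S.
Variables (n : nat).
Implicit Types (h l x : 'rV[int]_n).
Lemma phi1 h x : (phi h x).1 = ratmx x - 3^-1 *: ratmx h.
Proof. apply/rowP => j; rewrite /phi /= /ratmx !mxE. by field. Qed.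
Lemma phi2 h x : (phi h x).2 = 3^-1.
Proof. rewrite /phi /=. by field. Qed.
Lemma vS1 h l x a b : (vS h l x a b).1 = ratmx x + b%:~R *: (ratmx l - 3^-1 *: ratmx h).
Proof. apply/rowP => j; rewrite /vS /phi /= /ratmx !mxE. by field. Qed.
Lemma vS2 h l x a b : (vS h l x a b).2 = a%:~R + b%:~R * 3^-1.
Proof. rewrite /vS /phi /=. by field. Qed.
Lemma hbar1 : (hbar n).1 = 0. Proof. by []. Qed.
Lemma hbar2 : (hbar n).2 = 1. Proof. by []. Qed.
Lemma embM1 x : (embM x).1 = ratmx x. Proof. by []. Qed.
Lemma embM2 x : (embM x).2 = 0. Proof. by []. Qed.
Lemma ratmx_lin x l h (a b : int) :
  ratmx (x + b *: l + a *: h) = ratmx x + b%:~R *: ratmx l + a%:~R *: ratmx h.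
Proof. apply/rowP => j; rewrite /ratmx !mxE. by rewrite !rmorphD !rmorphM. Qed.
Lemma ratmx_inj : injective (@ratmx n).
Proof. move=> x y E; apply/rowP => j; apply: (@intr_inj rat).
by have := congr1 (fun m : 'rV[rat]_n => m 0 j) E; rewrite /ratmx !mxE. Qed.
Lemma ratmx_sub x y : ratmx (x - y) = ratmx x - ratmx y.
Proof. apply/rowP => j; rewrite /ratmx !mxE. by rewrite rmorphB. Qed.
Lemma pairE (u v : V n) : u.1 = v.1 -> u.2 = v.2 -> u = v.
Proof. by case: u; case: v => ? ? ? ? /= -> ->. Qed.
End S.

Ltac ex := rewrite ?(BqDl, BqDr, BqNl, BqNr, BqZl, BqZr, Bq0l, Bq0r) ?Bq_ratmx.

Theorem proposition3p1 (n : nat) (G : 'M[int]_n) (h l : 'rV[int]_n) :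
  symmetric_gram G -> pos_def G ->
  bform G h h = 3 -> is_characteristic G h ->
  hplane G h l ->
  (* (1) S is even and positive definite *)
  ((forall v, inS G h l v -> exists k : int, formV G v v = (2 * k)%:~R) /\
   (forall v, inS G h l v -> v != 0 -> 0 < formV G v v)) /\
  (* (2) hbar in 4 S^vee *)
  (exists y, dualS G h l y /\ hbar n = scaleV 4 y) /\
  (* (3) hbar^perp in S = h^perp in M, and the roots coincide *)
  (forall v, (inS G h l v /\ formV G v (hbar n) = 0) <->
             (exists x, bform G x h = 0 /\ v = embM x)) /\
  (forall v, (inS G h l v /\ formV G v (hbar n) = 0 /\ formV G v v = 2) <->
             (exists x, bform G x h = 0 /\ bform G x x = 2 /\ v = embM x)) /\
  (* (4) x |-> (1/3)(3x - h + hbar): h-planes of M <-> planes of S *)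
  ((forall x, hplane G h x -> planeS G h l (phi h x)) /\
   (forall x y, hplane G h x -> hplane G h y -> phi h x = phi h y -> x = y) /\
   (forall s, planeS G h l s -> exists x, hplane G h x /\ phi h x = s)) /\
  (* (5) {e in M | e^2 = e.h = 1} <-> {e in S | e^2 = 2, e.hbar = 4} *)
  ((forall x, bform G x x = 1 -> bform G x h = 1 ->
      inS G h l (phi h x) /\ formV G (phi h x) (phi h x) = 2 /\
      formV G (phi h x) (hbar n) = 4) /\
   (forall x y, bform G x x = 1 -> bform G x h = 1 ->
      bform G y y = 1 -> bform G y h = 1 -> phi h x = phi h y -> x = y) /\
   (forall s, inS G h l s -> formV G s s = 2 -> formV G s (hbar n) = 4 ->
      exists x, bform G x x = 1 /\ bform G x h = 1 /\ phi h x = s)).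
Proof.
move=> sG pd hh ch [hll hlh].
have hhl : bform G h l = 1 by rewrite bformC.
split; [split|].
- move=> v [x [a [b [hx ->]]]]; rewrite -/(vS h l x a b).
  have [q hq] : exists q, bform G x x = q * 2.
    by apply/dvdzP; have := ch x; rewrite hx subr0.
  exists (q + b * bform G x l + 2*b*b + 6*a*a + 4*a*b).
  rewrite formVE vS1 vS2; ex.
  rewrite (bformC sG l x) (bformC sG h x) hx hll hlh hhl hh hq.
  rewrite !(rmorphD, rmorphM) /=. by field.
- move=> v [x [a [b [hx ->]]]]; rewrite -/(vS h l x a b) => nz.
  set z := 3 *: x + (3*b) *: l - b *: h.
  have e1 : (vS h l x a b).1 = 3^-1 *: ratmx z.
    rewrite vS1; apply/rowP => j; rewrite /ratmx !mxE.
    rewrite !(rmorphD, rmorphM, rmorphN) /=. by field.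
  rewrite formVE e1 BqZl BqZr Bq_ratmx.
  have sq : 0 <= (vS h l x a b).2 * (vS h l x a b).2 by rewrite -expr2 sqr_ge0.
  case: (eqVneq z 0) => [z0|zn].
  + have v10 : (vS h l x a b).1 = 0.
      by rewrite e1 z0; apply/rowP=> j; rewrite /ratmx !mxE rmorph0 mulr0.
    have v2nz : (vS h l x a b).2 != 0.
      apply: contra nz => /eqP e2; rewrite [vS _ _ _ _ _]surjective_pairing v10 e2.
      by apply/eqP.
    have sq' : 0 < (vS h l x a b).2 * (vS h l x a b).2.
      by rewrite lt_neqAle eq_sym mulf_neq0 //= sq.
    have -> : bform G z z = 0 by rewrite z0 /bform !mul0mx mxE.
    nra.
  + have := pd z zn; rewrite -(ltr0z rat) => pz. nra.
have P3 : forall v, (inS G h l v /\ formV G v (hbar n) = 0) <->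
             (exists x, bform G x h = 0 /\ v = embM x).
  move=> v; split.
  + case=> [[x [a [b [hx ->]]]]]; rewrite -/(vS h l x a b) formVE hbar1 hbar2 Bq0r vS2 add0r => e.
    have eb : b = - (3*a).
      apply: (@intr_inj rat); rewrite rmorphN rmorphM /=. lra.
    exists (x + b *: l + a *: h); split.
      apply: (@intr_inj rat); rewrite -Bq_ratmx ratmx_lin; ex.
      rewrite hx hlh hh eb !(rmorphN, rmorphM) /=. lra.
    apply: pairE.
      rewrite vS1 embM1 ratmx_lin eb.
      apply/rowP=> j; rewrite /ratmx !mxE !(rmorphN, rmorphM) /=. by field.
    rewrite vS2 embM2 eb !(rmorphN, rmorphM) /=. by field.
  + case=> x [hx ->]; split.
      exists x, 0, 0; split=> //; rewrite -/(vS h l x 0 0).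
      apply: pairE.
        rewrite vS1 embM1; apply/rowP=> j; rewrite /ratmx !mxE /=. by field.
      rewrite vS2 embM2. by field.
    rewrite formVE hbar1 hbar2 Bq0r embM2. ring.
split.
  exists (0, 4^-1); split.
    move=> w [x [a [b [hx ->]]]]; rewrite -/(vS h l x a b).
    exists (3*a + b). rewrite formVE vS2 /= Bq0l.
    rewrite !(rmorphD, rmorphM) /=. by field.
  apply: pairE; rewrite /= ?scaler0 //.
split; first exact: P3.
split.
  move=> v; split.
  + case=> [hS [h0 h2]]. have [x [hx ev]] := (P3 v).1 (conj hS h0).
    exists x; split=> //; split=> //.
    move: h2; rewrite ev formVE embM1 embM2 Bq_ratmx => h2; apply: (@intr_inj rat).
    rewrite /=. lra.
  + case=> x [hx [h2 ev]]. have [hS h0] := (P3 v).2 (ex_intro _ x (conj hx ev)).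
    split=> //; split=> //. rewrite ev formVE embM1 embM2 Bq_ratmx h2 /=. ring.
have inSphi : forall x, bform G x h = 1 -> inS G h l (phi h x).
  move=> x hxh; exists (x - l), 0, 1; split.
    apply: (@intr_inj rat); rewrite -Bq_ratmx ratmx_sub; ex.
    rewrite hxh hlh /=. lra.
  rewrite -/(vS h l (x - l) 0 1); apply: pairE.
    rewrite phi1 vS1 ratmx_sub; apply/rowP=> j; rewrite !mxE /=. by field.
  rewrite phi2 vS2 /=. by field.
have phih : forall x, formV G (phi h x) (hbar n) = 4.
  move=> x; rewrite formVE hbar1 hbar2 Bq0r phi2. by field.
have phiphi : forall x, formV G (phi h x) (phi h x) = (bform G x x)%:~R + 5/3 - 2/3 * (bform G x h)%:~R.
  move=> x; rewrite formVE phi1 phi2; ex; rewrite (bformC sG h x) hh /=. by field.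
have phiinj : forall x y, phi h x = phi h y -> x = y.
  move=> x y E; apply: ratmx_inj; have := congr1 fst E; rewrite !phi1; exact: addIr.
have surj : forall s, inS G h l s -> formV G s (hbar n) = 4 ->
   exists z, bform G z h = 1 /\ phi h z = s /\ formV G s s = (bform G z z)%:~R + 1/3 + 2/3.
  move=> s [x [a [b [hx ->]]]]; rewrite -/(vS h l x a b).
  rewrite formVE hbar1 hbar2 Bq0r vS2 => eh.
  have eb : b = 1 - 3*a.
    apply: (@intr_inj rat); rewrite rmorphB rmorphM /=. lra.
  exists (x + b *: l + a *: h); split.
    apply: (@intr_inj rat); rewrite -Bq_ratmx ratmx_lin; ex.
    rewrite hx hlh hh eb !(rmorphB, rmorphM) /=. lra.
  split.
    apply: pairE.
      rewrite phi1 vS1 ratmx_lin eb; apply/rowP=> j; rewrite /ratmx !mxE !(rmorphB, rmorphM) /=. by field.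
    rewrite phi2 vS2 eb !(rmorphB, rmorphM) /=. by field.
  rewrite formVE vS1 vS2 -Bq_ratmx ratmx_lin; ex.
  rewrite (bformC sG l x) (bformC sG h x) hx hll hlh hhl hh eb !(rmorphB, rmorphM) /=. by field.
split.
  split.
    move=> x [hxx hxh]; split; first exact: inSphi.
    by rewrite phiphi phih hxx hxh; split=> //; field.
  split.
    by move=> x y _ _; exact: phiinj.
  move=> s [hS [e4 eh]]; have [z [hzh [ez es]]] := surj s hS eh.
  exists z; split=> //; split=> //.
  apply: (@intr_inj rat); move: es; rewrite e4 /= => es. lra.
split.
  move=> x hxx hxh; split; first exact: inSphi.
  by rewrite phiphi phih hxx hxh; split=> //; field.
split.
  by move=> x y _ _ _ _; exact: phiinj.
move=> s hS e2 eh; have [z [hzh [ez es]]] := surj s hS eh.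
exists z; split; last by split.
apply: (@intr_inj rat); move: es; rewrite e2 /= => es. lra.
Qed.
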